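(* Let $p$ be a prime, $d\ge1$, $g\in L^2(\mathbb{Z}_p^d)$ with $\|g\|_2=1$, and $A,B\subseteq\mathbb{Z}_p^d$. Let $E=\operatorname{supp}(g)$ and assume $g(x)$ is a positive real number for every $x\in E$ (so $g\ge 0$ everywhere). Then the Gabor system $\mathcal{G}(g,A,B)$ is an orthonormal basis of $L^2(\mathbb{Z}_p^d)$ if and only if all of the following hold: (i) $g=|E|^{-1/2}1_E$; (ii) $(E,B)$ is a spectral pair; (iii) $(E,A)$ is a tiling pair.
   Context: $\mathbb{Z}_p$ is the field of integers mod a prime $p$, $\mathbb{Z}_p^d$ the $d$-dimensional vector space over it, and $x\cdot b=\sum_i x_ib_i$. $\chi(t)=e^{2\pi i t/p}$ for $t\in\mathbb{Z}_p$. $L^2(\mathbb{Z}_p^d)$ is the space of functions $\mathbb{Z}_p^d\to\mathbb{C}$ with inner product $\langle f,h\rangle=\sum_{x\in\mathbb{Z}_p^d} f(x)\overline{h(x)}$ (counting measure). For $g\in L^2(\mathbb{Z}_p^d)$ and $A,B\subseteq\mathbb{Z}_p^d$, the Gabor system is $\mathcal{G}(g,A,B)=\{x\mapsto g(x-a)\chi(x\cdot b)\}_{a\in A,\ b\in B}$. $\operatorname{supp}(g)=\{x:g(x)\ne0\}$; $1_E$ is the indicator of $E$. A pair $(E,B)$ is a spectral pair if the functions $\{x\mapsto\chi(x\cdot b)\}_{b\in B}$, restricted to $E$, form an orthogonal basis of $L^2(E)$. A pair $(E,A)$ is a tiling pair if $\sum_{a\in A}1_E(x-a)=1$ for all $x\in\mathbb{Z}_p^d$.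 *)

(* Defs.v *)
From HB Require Import structures.
From mathcomp Require Import all_boot all_order all_algebra all_field.
Set Implicit Arguments. Unset Strict Implicit. Unset Printing Implicit Defensive.
Import Order.TTheory GRing.Theory Num.Theory.
Local Open Scope ring_scope.

Notation vecZp p d := 'rV['F_p]_d.

Definition dotZp (p d : nat) (x b : vecZp p d) : 'F_p :=
  \sum_(i < d) x 0 i * b 0 i.

(* e^{2 pi i / p}: p.-root (-1) is e^{i pi / p} (minimal argument convention) *)
Definition omega (p : nat) : algC := (p.-root (-1)) ^+ 2.

(* chi(t) = e^{2 pi i t / p}, t represented by its value in {0,..,p-1} *)
Definition chi (p : nat) (t : 'F_p) : algC := omega p ^+ (nat_of_ord t).

Definition ip (p d : nat) (f h : vecZp p d -> algC) : algC :=
  \sum_(x : vecZp p d) f x * (h x)^*.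

Definition supp (p d : nat) (g : vecZp p d -> algC) : {set vecZp p d} :=
  [set x | g x != 0].

Definition gabor (p d : nat) (g : vecZp p d -> algC) (a b : vecZp p d)
  : vecZp p d -> algC :=
  fun x => g (x - a) * chi (dotZp x b).

Definition gabor_ONB (p d : nat) (g : vecZp p d -> algC)
  (A B : {set vecZp p d}) : Prop :=
  (forall a a' b b', a \in A -> a' \in A -> b \in B -> b' \in B ->
     ip (gabor g a b) (gabor g a' b')
       = if (a == a') && (b == b') then 1 else 0)
  /\ (forall f : vecZp p d -> algC, exists c : vecZp p d -> vecZp p d -> algC,
        forall x, f x = \sum_(a in A) \sum_(b in B) c a b * gabor g a b x).

Definition expo (p d : nat) (b : vecZp p d) : vecZp p d -> algC :=
  fun x => chi (dotZp x b).

Definition ipE (p d : nat) (E : {set vecZp p d}) (f h : vecZp p d -> algC) : algC :=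
  \sum_(x in E) f x * (h x)^*.

Definition spectral_pair (p d : nat) (E B : {set vecZp p d}) : Prop :=
  (forall b, b \in B -> ipE E (expo b) (expo b) != 0)
  /\ (forall b b', b \in B -> b' \in B -> b != b' -> ipE E (expo b) (expo b') = 0)
  /\ (forall f : vecZp p d -> algC, exists c : vecZp p d -> algC,
        forall x, x \in E -> f x = \sum_(b in B) c b * expo b x).

Definition tiling_pair (p d : nat) (E A : {set vecZp p d}) : Prop :=
  forall x : vecZp p d, \sum_(a in A) (nat_of_bool ((x - a)%R \in E)) = 1%N.

(* Main.v *)
Require Import Defs.
From HB Require Import structures.
From mathcomp Require Import all_boot all_order all_algebra all_field.
From Stdlib Require Import ClassicalEpsilon.
From mathcomp Require Import ring.
Import Order.TTheory GRing.Theory Num.Theory.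
Local Open Scope ring_scope.

Section Helpers.
Variables (p d : nat).
Hypothesis pp : prime p.

Lemma omega_p : omega p ^+ p = 1.
Proof.
rewrite /omega -exprM mulnC exprM rootCK ?prime_gt0 //.
by rewrite sqrrN expr1n.
Qed.

Lemma chi_add (s t : 'F_p) : chi (s + t) = chi s * chi t.
Proof.
have hq : omega p ^+ (Zp_trunc (pdiv p)).+2 = 1 by rewrite Fp_cast // omega_p.
by rewrite /chi /= (expr_mod _ hq) exprD.
Qed.

Lemma chi_norm (t : 'F_p) : chi t * (chi t)^* = 1.
Proof.
have h1 : `|omega p| = 1.
  apply/eqP; rewrite -(pexpr_eq1 (prime_gt0 pp)) // -normrX omega_p normr1 //.
by rewrite /chi -normCK normrX h1 !expr1n.
Qed.

Lemma chi_neq0 (t : 'F_p) : chi t != 0.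
Proof. by apply/eqP => h; have := chi_norm t; rewrite h mul0r => /eqP; rewrite eq_sym oner_eq0. Qed.

Lemma dot_add (x y b : 'rV['F_p]_d) : dotZp (x + y) b = dotZp x b + dotZp y b.
Proof. by rewrite /dotZp -big_split; apply: eq_bigr => i _; rewrite mxE mulrDl. Qed.

Lemma chi_shift (x a b : 'rV['F_p]_d) :
  chi (dotZp x b) = chi (dotZp (x - a) b) * chi (dotZp a b).
Proof. by rewrite -chi_add -dot_add subrK. Qed.

End Helpers.

Section G.
Variables (p d : nat).
Hypothesis pp : prime p.
Variable g : 'rV['F_p]_d -> algC.
Hypothesis hpos : forall x, x \in supp g -> 0 < g x.

Lemma g_ge0 x : 0 <= g x.
Proof.
case hx: (x \in supp g); first by apply: ltW; apply: hpos.
by move: hx; rewrite inE => /negbFE/eqP ->.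
Qed.

Lemma g_conj x : (g x)^* = g x.
Proof. exact: geC0_conj (g_ge0 x). Qed.

Lemma ip_gabor a b a' b' : ip (gabor g a b) (gabor g a' b') =
  \sum_x (g (x - a) * g (x - a')) * (chi (dotZp x b) * (chi (dotZp x b'))^*).
Proof.
apply: eq_bigr => x _; rewrite /gabor rmorphM /= g_conj.
by rewrite mulrACA.
Qed.

Lemma ip_gabor_same (hg : forall x, g x = if x \in supp g then (sqrtC (#|supp g|%:R))^-1 else 0) a b b' :
  ip (gabor g a b) (gabor g a b') =
  (#|supp g|%:R)^-1 * (chi (dotZp a b) * (chi (dotZp a b'))^*) * ipE (supp g) (expo b) (expo b').
Proof.
rewrite ip_gabor (reindex_inj (addIr a)) /= /ipE [in RHS]big_mkcond mulr_sumr; apply: eq_bigr => y _ /=.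
rewrite addrK (@chi_shift p d pp (y + a) a b) (@chi_shift p d pp (y + a) a b') addrK.
rewrite hg /expo; case: ifP => _; last by rewrite !mul0r mulr0.
rewrite -expr2 exprVn sqrtCK rmorphM /=; ring.

Qed.

End G.

Theorem theorem1p4 (p d : nat) (g : 'rV['F_p]_d -> algC)
  (A B : {set 'rV['F_p]_d}) :
  prime p -> (0 < d)%N ->
  ip g g = 1 ->
  (forall x, x \in supp g -> 0 < g x) ->
  gabor_ONB g A B <->
  [/\ (forall x, g x = if x \in supp g then (sqrtC (#|supp g|%:R))^-1 else 0),
      spectral_pair (supp g) B
    & tiling_pair (supp g) A].
Proof.
move=> pp d0 hip hpos.
have gge0 := @g_ge0 _ _ _ hpos; have gconj := @g_conj _ _ _ hpos.
have notE : forall x, x \notin supp g -> g x = 0.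
  by move=> x; rewrite inE => /negbNE/eqP.
have Ene : exists x0, x0 \in supp g.
  case: (pickP (mem (supp g))) => [x0 hx0 | h]; first by exists x0.
  have : ip g g = 0.
    by rewrite /ip big1 // => x _; rewrite notE ?mul0r //; by apply/negbT; exact: (h x).
  by rewrite hip => /eqP; rewrite oner_eq0.
have [x0 hx0] := Ene.
have N0 : (#|supp g|%:R : algC) != 0.
  by rewrite pnatr_eq0 -lt0n card_gt0; apply/set0Pn; exists x0.
set E := supp g in hpos notE hx0 N0 *.
have key : forall (D : forall a a' x, a \in A -> a' \in A -> x - a \in E -> x - a' \in E -> a = a')
    x a a', a \in A -> a' \in A -> a != a' -> x - a' \in E -> g (x - a) = 0.
  move=> D x a a' ha ha' hne hx'.
  case hin: (x - a \in E); last by apply: notE; rewrite hin.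
  by rewrite (D _ _ _ ha ha' hin hx') eqxx in hne.
split.
- case=> hON hSp.
  have hpar : forall y, (#|B|%:R : algC) * \sum_(a in A) g (y - a) ^+ 2 = 1.
    move=> y; pose f := fun x => if x == y then 1 else (0 : algC).
    have [c hc] := hSp f.
    have hcoef : forall a' b', a' \in A -> b' \in B -> c a' b' = (gabor g a' b' y)^*.
      move=> a' b' ha' hb'.
      have e1 : ip f (gabor g a' b') = (gabor g a' b' y)^*.
        rewrite /ip (bigD1 y) //= big1 => [|x /negbTE hx]; first by rewrite /f eqxx mul1r addr0.
        by rewrite /f hx mul0r.
      rewrite -e1 /ip (eq_bigr (fun x => \sum_(a in A) \sum_(b in B) c a b * (gabor g a b x * (gabor g a' b' x)^*))); last first.
        move=> x _; rewrite hc mulr_suml; apply: eq_bigr => a _; rewrite mulr_suml; apply: eq_bigr => b _.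
        by rewrite mulrA.
      rewrite exchange_big /= (eq_bigr (fun a => \sum_(b in B) c a b * (if (a == a') && (b == b') then 1 else 0))); last first.
        move=> a ha; rewrite exchange_big /=; apply: eq_bigr => b hb.
        by rewrite -mulr_sumr -(hON _ _ _ _ ha ha' hb hb').
      rewrite (bigD1 a') //= [X in _ + X]big1 ?addr0 => [|a /andP[_ hne]]; last first.
        by apply: big1 => b _; rewrite (negbTE hne) mulr0.
      rewrite (bigD1 b') //= [X in _ + X]big1 ?addr0 => [|b /andP[_ hne]]; last by rewrite (negbTE hne) andbF mulr0.
      by rewrite !eqxx mulr1.
    have e := hc y; rewrite /f eqxx in e; rewrite [RHS]e mulr_sumr; apply: eq_bigr => a ha.
    rewrite [RHS](eq_bigr (fun _ => g (y - a) ^+ 2)) => [|b hb]; first by rewrite sumr_const mulr_natl.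
    rewrite hcoef // /gabor rmorphM /= gconj mulrACA [_^* * _]mulrC (@chi_norm p pp) mulr1 expr2 //.
  have [b0 hb0] : exists b0, b0 \in B.
    case: (set_0Vmem B) => [hB|[b0 hb0]]; last by exists b0.
    by have := hpar x0; rewrite hB cards0 mul0r => /eqP; rewrite eq_sym oner_eq0.
  have hdis : forall a a' x, a \in A -> a' \in A -> x - a \in E -> x - a' \in E -> a = a'.
    move=> a a' x ha ha' hxa hxa'; apply/eqP; apply/negPn/negP => hne.
    have := hON a a' b0 b0 ha ha' hb0 hb0; rewrite (negbTE hne) /= ip_gabor //.
    under eq_bigr do rewrite (@chi_norm p pp) mulr1.
    move/psumr_eq0P => /(_ (fun z _ => mulr_ge0 (gge0 _) (gge0 _)) x isT) /eqP.
    rewrite mulf_eq0; move: hxa hxa'; rewrite /E !inE => /negbTE-> /negbTE->; done.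
  have htile : tiling_pair E A.
    move=> x.
    case: (pickP (fun a => (a \in A) && (x - a \in E))) => [a0 /andP[ha0 hxa0] | hnone].
      rewrite (bigD1 a0) //= hxa0 big1 ?addn0 // => a /andP[ha hne].
      case hin: (x - a \in E) => //.
      by rewrite (hdis _ _ _ ha ha0 hin hxa0) eqxx in hne.
    exfalso; have : (#|B|%:R : algC) * \sum_(a in A) g (x - a) ^+ 2 = 0.
      rewrite big1 ?mulr0 // => a ha.
      by rewrite notE ?expr2 ?mul0r //; apply/negbT; have := hnone a; rewrite ha.
    by rewrite hpar => /eqP; rewrite oner_eq0.
  have [a0 ha0] : exists a0, a0 \in A.
    case: (set_0Vmem A) => [hA|[a0 ha0]]; last by exists a0.
    by have := htile x0; rewrite hA big_set0.
  have hg2 : forall x, x \in E -> (#|B|%:R : algC) * g x ^+ 2 = 1.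
    move=> x hx; have := hpar (x + a0); rewrite (bigD1 a0) //= addrK [X in _ + X]big1 ?addr0 // => a /andP[ha hne].
    by rewrite (key hdis (x + a0) a a0 ha ha0 hne) ?addrK ?expr2 ?mul0r.
  have hEB : #|E| = #|B|.
    have : (#|B|%:R : algC) = #|E|%:R.
      transitivity ((#|B|%:R : algC) * ip g g); first by rewrite hip mulr1.
      rewrite /ip mulr_sumr (bigID (mem E)) /= [X in _ + X]big1 ?addr0 => [|x hx]; last first.
        by rewrite notE ?mul0r ?mulr0.
      rewrite [RHS](_ : _ = \sum_(x in E) (1 : algC)); last by rewrite sumr_const.
      apply: eq_bigr => x hx.
      by rewrite gconj -expr2 hg2.
    by move/eqP; rewrite eqr_nat => /eqP.
  have hgf : forall x, g x = if x \in E then (sqrtC #|E|%:R)^-1 else 0.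
    move=> x; case: ifP => hx; last by apply: notE; rewrite hx.
    have h2 := hg2 x hx; rewrite -hEB in h2.
    apply/eqP; rewrite -(@eqrXn2 _ 2) ?gge0 //; last by rewrite invr_ge0 sqrtC_ge0 ler0n.
    rewrite exprVn sqrtCK; apply/eqP; apply: (mulfI N0); rewrite h2 mulfV //.
  split => //; split; [|split].
  - move=> b hb; rewrite /ipE (eq_bigr (fun _ => 1)) ?sumr_const // => x _.
    exact: (@chi_norm p pp).
  - move=> b b' hb hb' hne.
    have := hON a0 a0 b b' ha0 ha0 hb hb'; rewrite (negbTE hne) andbF.
    rewrite (@ip_gabor_same p d pp g hpos hgf) => /eqP.
    by rewrite !mulf_eq0 invr_eq0 (negbTE N0) conjC_eq0 !(negbTE (@chi_neq0 p pp _)) /= => /eqP.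
  - move=> f; have [c' hc'] := hSp (fun x => f (x - a0)).
    exists (fun b => c' a0 b * (sqrtC #|E|%:R)^-1 * chi (dotZp a0 b)) => x hx.
    have := hc' (x + a0); rewrite addrK => ->.
    rewrite (bigD1 a0) //= [X in _ + X]big1 ?addr0 => [|a /andP[ha hne]]; last first.
      apply: big1 => b _.
      by rewrite /gabor (key hdis (x + a0) a a0 ha ha0 hne) ?addrK // mul0r mulr0.
    apply: eq_bigr => b hb.
    rewrite /gabor addrK hgf hx /expo (@chi_shift p d pp (x + a0) a0 b) addrK.
    ring.
- case=> hg [hs1 [hs2 hs3]] htile.
  have hdis : forall a a' x, a \in A -> a' \in A -> x - a \in E -> x - a' \in E -> a = a'.
    move=> a a' x ha ha' hxa hxa'; apply/eqP; apply/negPn/negP => hne.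
    have := htile x; rewrite (bigD1 a) //= hxa (bigD1 a') /=; last by rewrite ha' eq_sym hne.
    rewrite hxa' => h; have : (1 + (1 + \sum_(i | (i \in A) && (i != a) && (i != a')) ((x - i)%R \in E)) = 1)%N := h. by rewrite !add1n.
  have hex : forall x, exists2 a, a \in A & x - a \in E.
    move=> x; case: (pickP (fun a => (a \in A) && (x - a \in E))) => [a0 /andP[ha0 hxa0] | hnone].
      by exists a0.
    have := htile x; rewrite big1 // => a ha.
    by have := hnone a; rewrite ha /= => ->.
  split.
  - move=> a a' b b' ha ha' hb hb'.
    case: (eqVneq a a') => [<-|hne] /=.
      rewrite (@ip_gabor_same p d pp g hpos hg).
      case: (eqVneq b b') => [<-|hbne] /=.
        rewrite (@chi_norm p pp) mulr1 /ipE (eq_bigr (fun _ => 1)) ?sumr_const ?mulVf // => x _.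
        exact: (@chi_norm p pp).
      by rewrite hs2 // mulr0.
    rewrite ip_gabor // big1 // => x _.
    case hin: (x - a' \in E).
      by rewrite (key hdis x a a' ha ha' hne hin) !mul0r.
    by rewrite (notE (x - a')) ?hin // mulr0 mul0r.
  - move=> f.
    have hC : forall a, exists c : _ -> algC, forall y, y \in E -> f (y + a) = \sum_(b in B) c b * expo b y.
      by move=> a; apply: (hs3 (fun y => f (y + a))).
    pose C a := proj1_sig (constructive_indefinite_description _ (hC a)).
    have HC : forall a y, y \in E -> f (y + a) = \sum_(b in B) C a b * expo b y.
      by move=> a; exact: (proj2_sig (constructive_indefinite_description _ (hC a))).
    exists (fun a b => C a b * sqrtC #|E|%:R * (chi (dotZp a b))^*) => x.
    have [a0 ha0 hx] := hex x.
    rewrite -{1}(subrK a0 x) (HC a0 _ hx).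
    rewrite [RHS](bigD1 a0) //= [X in _ = _ + X]big1 ?addr0 => [|a /andP[ha hne]]; last first.
      apply: big1 => b _.
      by rewrite /gabor (key hdis x a a0 ha ha0 hne hx) mul0r mulr0.
    apply: eq_bigr => b hb.
    have hs : sqrtC (#|E|%:R : algC) * (sqrtC #|E|%:R)^-1 = 1.
      by rewrite mulfV // sqrtC_eq0.
    rewrite /gabor hg hx /expo (@chi_shift p d pp x a0 b).
    transitivity (C a0 b * chi (dotZp (x - a0) b) * (sqrtC (#|E|%:R : algC) * (sqrtC #|E|%:R)^-1)
       * (chi (dotZp a0 b) * (chi (dotZp a0 b))^*)).
      by rewrite hs (@chi_norm p pp) !mulr1.
    ring.
Qed.
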